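(* Let $\mathcal K=\{\mathbf x\in\mathbb R^n : \mathbf k_i^T\mathbf x\ge 0,\ i=1,\dots,p\}$ be a polyhedral cone with non-empty topological interior, where each $\mathbf k_i$ has unit Euclidean length, and let $\mathbf x_\infty$ and $z_\infty$ denote the center of its insphere and its inradius, respectively. Define linear programs as follows. Problem $P_0$: maximize $z$ over $(\mathbf x,z)\in\mathbb R^n\times\mathbb R$ subject to $\mathbf k_i^T\mathbf x\ge z$ for all $i$ and $-1\le x_i\le 1$ for all $i=1,\dots,n$. Given Problem $P_\ell$, let $(\mathbf x_\ell,z_\ell)$ be an (arbitrarily chosen) optimal solution of $P_\ell$, let $\mathbf u_\ell=\mathbf x_\ell/\|\mathbf x_\ell\|$, and let Problem $P_{\ell+1}$ be Problem $P_\ell$ with the additional constraint $\mathbf u_\ell^T\mathbf x\le 1$. Then $\mathbf x_\ell\to\mathbf x_\infty$ and $z_\ell\to z_\infty$ as $\ell\to\infty$.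
   Context: $B_r(\mathbf x)=\{\mathbf y\in\mathbb R^n:\|\mathbf x-\mathbf y\|\le r\}$ denotes the closed ball, with $\|\cdot\|$ the Euclidean norm. The insphere of a polyhedral cone $\mathcal K$ is the largest ball contained in $\mathcal K$ whose center lies in $B_1(\mathbf 0)$ (it is unique when $\mathcal K$ has non-empty interior), and the inradius is its radius. (For each $\ell$, problem $P_\ell$ has an optimal solution and $\|\mathbf x_\ell\|\ge 1$, so $\mathbf u_\ell$ is well defined.) *)

(* Defs.v *)
From HB Require Import structures.
From mathcomp Require Import all_boot all_order all_algebra.
From mathcomp Require Import reals.
Set Implicit Arguments. Unset Strict Implicit. Unset Printing Implicit Defensive.
Import Order.TTheory GRing.Theory Num.Theory.
Local Open Scope ring_scope.

Section Defs.
Variables (R : realType) (n p : nat).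

Definition dotv (a b : 'rV[R]_n) : R := \sum_(i < n) a ord0 i * b ord0 i.
Definition enorm (a : 'rV[R]_n) : R := Num.sqrt (dotv a a).

Definition in_cone (k : 'I_p -> 'rV[R]_n) (x : 'rV[R]_n) : Prop :=
  forall i, 0 <= dotv (k i) x.

Definition ball_in_cone (k : 'I_p -> 'rV[R]_n) (c : 'rV[R]_n) (r : R) : Prop :=
  forall y, enorm (c - y) <= r -> in_cone k y.

Definition cone_has_interior (k : 'I_p -> 'rV[R]_n) : Prop :=
  exists c e, 0 < e /\ ball_in_cone k c e.

(* (c, r) is the insphere (center, inradius): the largest ball contained in K
   whose center lies in B_1(0). *)
Definition insphere (k : 'I_p -> 'rV[R]_n) (c : 'rV[R]_n) (r : R) : Prop :=
  [/\ enorm c <= 1, ball_in_cone k c r &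
      forall c' r', enorm c' <= 1 -> ball_in_cone k c' r' -> r' <= r].

Definition unitv (x : 'rV[R]_n) : 'rV[R]_n := (enorm x)^-1 *: x.

(* Feasible set of problem P_l, given the previous optimal points X 0, ..., X (l-1). *)
Definition feasible (k : 'I_p -> 'rV[R]_n) (X : nat -> 'rV[R]_n) (l : nat)
    (x : 'rV[R]_n) (z : R) : Prop :=
  [/\ forall i, z <= dotv (k i) x,
      forall j : 'I_n, -1 <= x ord0 j <= 1 &
      forall m, (m < l)%N -> dotv (unitv (X m)) x <= 1].

Definition optimal (k : 'I_p -> 'rV[R]_n) (X : nat -> 'rV[R]_n) (l : nat)
    (x : 'rV[R]_n) (z : R) : Prop :=
  feasible k X l x z /\ forall x' z', feasible k X l x' z' -> z' <= z.

End Defs.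

(* Main.v *)
Require Import Defs.
From Stdlib Require Import Classical.
From HB Require Import structures.
From mathcomp Require Import all_boot all_order all_algebra.
From mathcomp Require Import reals.
From mathcomp Require Import ring lra.
Import Order.TTheory GRing.Theory Num.Theory.
Local Open Scope ring_scope.
Set Implicit Arguments. Unset Strict Implicit.

Section Aux.
Variables (R : realType) (n : nat).
Implicit Types (a b c : 'rV[R]_n).

Lemma dotvC a b : dotv a b = dotv b a.
Proof. by apply: eq_bigr => i _; rewrite mulrC. Qed.

Lemma dotvDl a b c : dotv (a + b) c = dotv a c + dotv b c.
Proof. by rewrite /dotv -big_split; apply: eq_bigr => i _; rewrite !mxE mulrDl. Qed.

Lemma dotvZl t a b : dotv (t *: a) b = t * dotv a b.
Proof. by rewrite /dotv mulr_sumr; apply: eq_bigr => i _; rewrite !mxE mulrA. Qed.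

Lemma dotvNl a b : dotv (- a) b = - dotv a b.
Proof. by rewrite -scaleN1r dotvZl mulN1r. Qed.

Lemma dotvBl a b c : dotv (a - b) c = dotv a c - dotv b c.
Proof. by rewrite dotvDl dotvNl. Qed.

Lemma dotvDr a b c : dotv c (a + b) = dotv c a + dotv c b.
Proof. by rewrite dotvC dotvDl !(dotvC c). Qed.

Lemma dotvZr t a b : dotv b (t *: a) = t * dotv b a.
Proof. by rewrite dotvC dotvZl dotvC. Qed.

Lemma dotvBr a b c : dotv c (a - b) = dotv c a - dotv c b.
Proof. by rewrite dotvC dotvBl !(dotvC c). Qed.

Lemma dotv0r a : dotv a 0 = 0.
Proof. by rewrite /dotv big1 // => i _; rewrite mxE mulr0. Qed.

Lemma dotv_ge0 a : 0 <= dotv a a.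
Proof. by rewrite /dotv sumr_ge0 // => i _; rewrite -expr2 sqr_ge0. Qed.

Lemma enorm_ge0 a : 0 <= enorm a.
Proof. exact: sqrtr_ge0. Qed.

Lemma enorm_sqr a : enorm a ^+ 2 = dotv a a.
Proof. by rewrite sqr_sqrtr // dotv_ge0. Qed.

Lemma lin2 (s t : R) a b :
  dotv (s *: a + t *: b) (s *: a + t *: b) =
  s ^+ 2 * dotv a a + 2 * s * t * dotv a b + t ^+ 2 * dotv b b.
Proof.
rewrite !dotvDl !dotvDr !dotvZl !dotvZr (dotvC b a); ring.
Qed.

Lemma cs_sq a b : dotv a b ^+ 2 <= dotv a a * dotv b b.
Proof.
set A := dotv a a; set B := dotv b b; set C := dotv a b.
have key : forall t, 0 <= A - 2 * t * C + t ^+ 2 * B.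
  move=> t; have := dotv_ge0 (1 *: a + (- t) *: b).
  by rewrite lin2 -/A -/B -/C; congr (_ <= _); ring.
have A0 : 0 <= A by apply: dotv_ge0.
have B0 : 0 <= B by apply: dotv_ge0.
have [Bz|Bp] := eqVneq B 0.
  have [Cz|Cn] := eqVneq C 0; first by rewrite Cz Bz expr0n mulr0.
  have := key ((A + 1) / C); rewrite Bz mulr0 addr0.
  have -> : 2 * ((A + 1) / C) * C = 2 * (A + 1) by field.
  lra.
have Bpos : 0 < B by rewrite lt_def Bp B0.
have := key (C / B).
have -> : A - 2 * (C / B) * C + (C / B) ^+ 2 * B = A - C ^+ 2 / B.
  by field.
rewrite subr_ge0 ler_pdivrMr //.
Qed.

Lemma cs a b : dotv a b <= enorm a * enorm b.
Proof.
rewrite /enorm -sqrtrM ?dotv_ge0 //.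
apply: (le_trans (ler_norm _)); rewrite -sqrtr_sqr.
by apply: ler_wsqrtr; apply: cs_sq.
Qed.

Lemma enormZ t a : enorm (t *: a) = `|t| * enorm a.
Proof.
by rewrite /enorm dotvZl dotvZr mulrA -expr2 sqrtrM ?sqr_ge0 // sqrtr_sqr.
Qed.

Lemma enormN a : enorm (- a) = enorm a.
Proof. by rewrite -scaleN1r enormZ normrN1 mul1r. Qed.

Lemma enorm0 : enorm (0 : 'rV[R]_n) = 0.
Proof. by rewrite /enorm dotv0r sqrtr0. Qed.

Lemma coord_sq a (j : 'I_n) : a ord0 j ^+ 2 <= dotv a a.
Proof.
rewrite /dotv (bigD1 j) //= -expr2 lerDl sumr_ge0 // => i _.
by rewrite -expr2 sqr_ge0.
Qed.

Lemma coord_le a (j : 'I_n) : `|a ord0 j| <= enorm a.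
Proof. by rewrite -sqrtr_sqr; apply: ler_wsqrtr; apply: coord_sq. Qed.

Lemma unitv_le1 a : enorm (unitv a) <= 1.
Proof.
rewrite /unitv enormZ ger0_norm ?invr_ge0 ?enorm_ge0 //.
have [->|nz] := eqVneq (enorm a) 0; first by rewrite invr0 mul0r.
by rewrite mulVf.
Qed.

Lemma unitv_dot a : dotv (unitv a) a = enorm a.
Proof.
rewrite /unitv dotvZl -enorm_sqr.
have [->|nz] := eqVneq (enorm a) 0; first by rewrite invr0 mul0r.
by rewrite expr2 mulKf.
Qed.

End Aux.
Lemma cell_exists (R : realType) (n : nat) (e : R) : 0 < e ->
  exists (T : finType) (cell : 'rV[R]_n -> T), forall v w : 'rV[R]_n,
    (forall j, -1 <= v ord0 j <= 1) -> (forall j, -1 <= w ord0 j <= 1) ->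
    cell v = cell w -> dotv (v - w) (v - w) <= e ^+ 2.
Proof.
move=> e0.
pose h := e / (n.+1)%:R.
have h0 : 0 < h by rewrite divr_gt0 // ltr0n.
pose idx (x : R) := Num.truncn ((x + 1) / h).
pose K := Num.truncn (2 / h).
have idxK : forall x, -1 <= x <= 1 -> (idx x <= K)%N.
  move=> x /andP[x1 x2]; apply: Num.Theory.le_truncn.
  by rewrite ler_pM2r ?invr_gt0 //; lra.
exists {ffun 'I_n -> 'I_K.+1}.
exists (fun v => [ffun j : 'I_n => (inord (idx (v ord0 j)) : 'I_K.+1)]).
move=> v w bv bw eq.
have step : forall j : 'I_n, (v - w) ord0 j ^+ 2 <= h ^+ 2.
  move=> j.
  have := congr1 (fun f : {ffun 'I_n -> 'I_K.+1} => nat_of_ord (f j)) eq; rewrite /= !ffunE.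
  rewrite !inordK ?ltnS ?idxK // => eqi.
  set a := (v ord0 j + 1) / h; set b := (w ord0 j + 1) / h.
  have a0 : 0 <= a by rewrite /a divr_ge0 ?(ltW h0) //; have := bv j; lra.
  have b0 : 0 <= b by rewrite /b divr_ge0 ?(ltW h0) //; have := bw j; lra.
  have /andP[a1 a2] := Num.Theory.truncn_itv a0.
  have /andP[b1 b2] := Num.Theory.truncn_itv b0.
  rewrite /idx -/a -/b in eqi.
  rewrite eqi in a1 a2.
  have d1 : a - b < 1 by move: a2 b1; rewrite -natr1; lra.
  have d2 : b - a < 1 by move: b2 a1; rewrite -natr1; lra.
  have -> : (v - w) ord0 j = (a - b) * h.
    rewrite !mxE /a /b; field; exact: lt0r_neq0.
  rewrite exprMn ler_piMl ?sqr_ge0 //.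
  have : (a - b) ^+ 2 <= 1 by nra.
  done.
apply: (le_trans (y := \sum_(j < n) h ^+ 2)).
  by rewrite /dotv; apply: ler_sum => j _; rewrite -expr2; apply: step.
rewrite sumr_const card_ord /h.
rewrite expr_div_n -[X in X <= _]mulr_natr mulrAC ler_pdivrMr ?exprn_gt0 ?ltr0n //.
have N0 : 0 <= (n%:R : R) by [].
rewrite -natr1.
have e2 : 0 <= e ^+ 2 by apply: sqr_ge0.
nra.
Qed.

Lemma packing (R : realType) (n : nat) (e : R) (Y : nat -> 'rV[R]_n)
  (bad : pred nat) : 0 < e ->
  (forall l j, -1 <= Y l ord0 j <= 1) ->
  (forall m l, (m < l)%N -> bad m -> e ^+ 2 < dotv (Y m - Y l) (Y m - Y l)) ->
  exists N, forall l, (N <= l)%N -> ~~ bad l.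
Proof.
move=> e0 box sep.
have [T [cell Hc]] := @cell_exists R n e e0.
have cnt : forall M, (count bad (iota 0 M) <= #|T|)%N.
  move=> M; set s := filter bad (iota 0 M).
  have us : uniq s by rewrite filter_uniq // iota_uniq.
  have inj : {in s &, injective (fun m => cell (Y m))}.
    move=> x y; rewrite !mem_filter => /andP[bx _] /andP[by_ _] eqc.
    have le1 := Hc _ _ (box x) (box y) eqc.
    have le2 := Hc _ _ (box y) (box x) (esym eqc).
    case: (ltngtP x y) => // [xy|yx].
      by have := sep _ _ xy bx; rewrite ltNge le1.
    by have := sep _ _ yx by_; rewrite ltNge le2.
  have um : uniq (map (fun m => cell (Y m)) s) by rewrite map_inj_in_uniq.
  rewrite -size_filter -/s -(size_map (fun m => cell (Y m))).
  by rewrite -(card_uniqP um) max_card.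
apply: NNPP => H.
have H' : forall N, exists l, (N <= l)%N /\ bad l.
  move=> N; apply: NNPP => H2; apply: H; exists N => l Hl; apply/negP => bl.
  by apply: H2; exists l.
have bigc : forall j, exists M, (j <= count bad (iota 0 M))%N.
  elim=> [|j [M HM]]; first by exists 0%N.
  have [l [Ml bl]] := H' M.
  exists l.+1.
  have Ed : l.+1 = (M + (l.+1 - M))%N by rewrite subnKC // leqW.
  rewrite [in iota 0 l.+1]Ed iotaD count_cat add0n.
  rewrite -addn1 leq_add // -has_count; apply/hasP; exists l => //.
  by rewrite mem_iota Ml /= -Ed.
have [M HM] := bigc #|T|.+1.
by have := leq_trans HM (cnt M); rewrite ltnn.
Qed.
Unset Implicit Arguments.
Theorem theorem1 (R : realType) (n p : nat) (k : 'I_p -> 'rV[R]_n)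
    (xinf : 'rV[R]_n) (zinf : R) (X : nat -> 'rV[R]_n) (Z : nat -> R) :
  (forall i, enorm (k i) = 1) ->
  cone_has_interior k ->
  insphere k xinf zinf ->
  (forall l, optimal k X l (X l) (Z l)) ->
  (forall e : R, 0 < e -> exists N : nat, forall l, (N <= l)%N ->
      enorm (X l - xinf) < e) /\
  (forall e : R, 0 < e -> exists N : nat, forall l, (N <= l)%N ->
      `|Z l - zinf| < e).
Proof.
move=> Hk [c [e [e0 Hce]]] [Hxn Hxb Hmax] Hopt.
have Hball : forall c r, (forall i, r <= dotv (k i) c) -> ball_in_cone k c r.
  move=> c' r H y Hy i; have := cs (k i) (c' - y).
  rewrite Hk mul1r dotvBr; have := H i; lra.
have Hin : forall c r, ball_in_cone k c r -> 0 <= r -> forall i, r <= dotv (k i) c.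
  move=> c' r Hb r0 i.
  have := Hb (c' - r *: k i).
  rewrite opprB addrC subrK enormZ Hk mulr1 ger0_norm // lexx => /(_ isT i).
  rewrite dotvBr dotvZr -enorm_sqr Hk expr1n mulr1; lra.
have z0 : 0 <= zinf.
  apply: (Hmax 0 0); first by rewrite enorm0.
  by apply: Hball => i; rewrite dotv0r.
have zi := Hin _ _ Hxb z0.
have zpos : 0 < zinf.
  have ce := Hin _ _ Hce (ltW e0).
  set s := enorm c + 1.
  have s0 : 0 < s by rewrite /s; have := enorm_ge0 c; lra.
  have : e / s <= zinf.
    apply: (Hmax (s^-1 *: c)).
      rewrite enormZ ger0_norm ?invr_ge0 ?(ltW s0) // mulrC ler_pdivrMr //.
      by rewrite mul1r /s lerDl.
    apply: Hball => i; rewrite dotvZr [X in _ <= X]mulrC ler_pM2r ?invr_gt0 //.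
  by apply: lt_le_trans; rewrite divr_gt0.
have p0 : (0 < p)%N.
  rewrite lt0n; apply/negP => /eqP p0.
  have : zinf + 1 <= zinf.
    apply: (Hmax 0); first by rewrite enorm0.
    by move=> y _ [m hm]; exfalso; move: hm; rewrite p0.
  lra.
pose i0 := Ordinal p0.
have HA : forall y z, (forall i, z <= dotv (k i) y) -> z <= zinf * enorm y.
  move=> y z H.
  have [ny0|nyn] := eqVneq (enorm y) 0.
    rewrite ny0 mulr0; apply: (le_trans (H i0)).
    by have := cs (k i0) y; rewrite ny0 mulr0.
  have ny : 0 < enorm y by rewrite lt_def nyn enorm_ge0.
  rewrite mulrC -ler_pdivrMl //.
  apply: (Hmax ((enorm y)^-1 *: y)).
    by rewrite enormZ ger0_norm ?invr_ge0 ?(ltW ny) // mulVf.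
  by apply: Hball => i; rewrite dotvZr ler_pM2l ?invr_gt0.
have Hfeas : forall l, feasible k X l xinf zinf.
  move=> l; split => //.
    by move=> j; rewrite -ler_norml; apply: le_trans (coord_le _ _) Hxn.
  move=> m _; apply: (le_trans (cs _ _)).
  have := unitv_le1 (X m); have := enorm_ge0 (unitv (X m)).
  have := enorm_ge0 xinf; nra.
have HZ : forall l, zinf <= Z l by move=> l; apply: (Hopt l).2; apply: Hfeas.
have HZX : forall l, Z l <= zinf * enorm (X l).
  by move=> l; apply: HA; have [[]] := Hopt l.
have HX1 : forall l, 1 <= enorm (X l).
  move=> l; have := HZ l; have := HZX l; nra.
have Hmid : forall l,
    dotv (X l - xinf) (X l - xinf) <= 2 * (dotv (X l) (X l) - 1).
  move=> l.
  pose mp := 2^-1 *: X l + 2^-1 *: xinf.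
  have zl : forall i, Z l <= dotv (k i) (X l) by have [[]] := Hopt l.
  have hm : zinf <= zinf * enorm mp.
    apply: HA => i; rewrite dotvDr !dotvZr.
    have := zl i; have := zi i; have := HZ l; lra.
  have m1 : 1 <= enorm mp by rewrite -(ler_pM2l zpos) mulr1.
  have m2 : 1 <= dotv mp mp by rewrite -enorm_sqr; nra.
  have x1 : dotv xinf xinf <= 1.
    by rewrite -enorm_sqr; have := enorm_ge0 xinf; nra.
  move: m2; rewrite /mp lin2.
  have -> : X l - xinf = 1 *: X l + (-1) *: xinf by rewrite scale1r scaleN1r.
  rewrite lin2.
  have h2 : (2^-1 : R) ^+ 2 = 4^-1 by field.
  rewrite h2.
  have h3 : 2 * 2^-1 * 2^-1 = (2^-1 : R) by field.
  rewrite h3.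
  lra.
have Hbad : forall eps, 0 < eps -> exists N, forall l, (N <= l)%N ->
    enorm (X l) <= 1 + eps.
  move=> eps eps0.
  have box : forall l j, -1 <= X l ord0 j <= 1 by move=> l j; have [[]] := Hopt l.
  have sep : forall m l, (m < l)%N -> 1 + eps < enorm (X m) ->
      eps ^+ 2 < dotv (X m - X l) (X m - X l).
    move=> m l ml bm.
    have [[_ _ cut] _] := Hopt l.
    have c1 := cut m ml.
    have c2 := cs (unitv (X m)) (X m - X l).
    rewrite dotvBr unitv_dot in c2.
    have := unitv_le1 (X m); have := enorm_ge0 (unitv (X m)).
    have := enorm_ge0 (X m - X l).
    rewrite -enorm_sqr => g1 g2 g3.
    have : eps < enorm (X m - X l) by nra.
    move=> h; nra.
  have [N HN] := @packing R n eps X [pred m | 1 + eps < enorm (X m)] eps0 box sep.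
  by exists N => l /HN /=; rewrite -leNgt.
split.
  move=> e' e'0.
  set eps := e' ^+ 2 / (8 * (1 + e' ^+ 2)).
  have q0 : 0 < 1 + e' ^+ 2 by have := sqr_ge0 e'; lra.
  have eq1 : eps * (8 * (1 + e' ^+ 2)) = e' ^+ 2.
    by rewrite /eps mulfVK //; apply: lt0r_neq0; lra.
  have eps0 : 0 < eps by rewrite /eps divr_gt0 ?exprn_gt0 //; lra.
  have [N HN] := Hbad eps eps0.
  exists N => l /HN hl.
  have := Hmid l; rewrite -enorm_sqr -(enorm_sqr (X l)) => hm.
  have := HX1 l; have := enorm_ge0 (X l - xinf).
  have e2 : 0 < e' ^+ 2 by apply: exprn_gt0.
  have a1 : 8 * eps <= e' ^+ 2 by nra.
  have a2 : eps <= 1 by nra.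
  move=> g1 g2.
  have : enorm (X l - xinf) ^+ 2 < e' ^+ 2 by nra.
  nra.
move=> e' e'0.
set eps := e' / (zinf + 1).
have eq1 : eps * (zinf + 1) = e' by rewrite /eps mulfVK //; apply: lt0r_neq0; lra.
have eps0 : 0 < eps by rewrite /eps divr_gt0 //; lra.
have [N HN] := Hbad eps eps0.
exists N => l /HN hl.
rewrite ger0_norm; last by have := HZ l; lra.
have := HZX l; have := HZ l; nra.
Qed.
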